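(* Let $\mathbf{H}\in\mathbb{R}^{n\times m}$ and $\mathbf{v}\in\mathbb{R}^n$ be arbitrary and let $\mathbf{y}=\mathbf{H}\mathbf{e}+\mathbf{v}$. If $\tau>4\|\mathbf{v}\|^2$, then every optimal point $\mathbf{X}^\star$ of the SDR problem $\min\mathrm{Tr}(\mathbf{L}\mathbf{X})$ s.t. $\mathrm{diag}(\mathbf{X})=\mathbf{e}$, $\mathbf{X}\succeq\mathbf{0}$ yields $\hat{\mathbf{s}}_{\mathrm{SDR}}=\mathbf{e}$, i.e. $\mathrm{sgn}([\mathbf{X}^\star]_{i,m+1})=1$ for all $i=1,\dots,m$.
   Context: $\mathbf{e}$ is the all-ones vector (of the appropriate dimension). $\mathbf{L}=\begin{bmatrix}\mathbf{H}^T\mathbf{H}&-\mathbf{H}^T\mathbf{y}\\-\mathbf{y}^T\mathbf{H}&\mathbf{y}^T\mathbf{y}\end{bmatrix}$. $\mathcal{X}=\{\mathbf{X}\in\mathbb{S}^{m+1}:\mathrm{diag}(\mathbf{X})=\mathbf{e},\ \mathbf{X}\succeq\mathbf{0}\}$, where $\mathbb{S}^{k}$ is the set of real symmetric $k\times k$ matrices. $\mathbf{M}=[\mathbf{I}_m\ \ -\mathbf{e}]\in\mathbb{R}^{m\times(m+1)}$, $\mathcal{H}=\{\mathbf{X}\in\mathbb{S}^{m+1}:\mathrm{Tr}(\mathbf{M}\mathbf{X}\mathbf{M}^T)=1\}$, $\mathbf{L}_0=\mathbf{M}^T\mathbf{H}^T\mathbf{H}\mathbf{M}$, and $\tau=\min_{\mathbf{X}\in\mathcal{X}\cap\mathcal{H}}\mathrm{Tr}(\mathbf{L}_0\mathbf{X})$.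 The SDR estimate from an optimal point $\mathbf{X}^\star$ is $[\hat{\mathbf{s}}_{\mathrm{SDR}}]_i=\mathrm{sgn}([\mathbf{X}^\star]_{i,m+1})$ with $\mathrm{sgn}(x)=1$ for $x>0$, $-1$ for $x\le0$. *)

(* Defs.v *)
From HB Require Import structures.
From mathcomp Require Import all_boot all_order all_algebra.
Set Implicit Arguments. Unset Strict Implicit. Unset Printing Implicit Defensive.
Import Order.TTheory GRing.Theory Num.Theory.
Local Open Scope ring_scope.

Definition psd (R : realFieldType) (k : nat) (X : 'M[R]_k) : Prop :=
  X^T = X /\ forall x : 'cV[R]_k, 0 <= (x^T *m X *m x) 0 0.

Definition feasX (R : realFieldType) (k : nat) (X : 'M[R]_k) : Prop :=
  (forall i, X i i = 1) /\ psd X.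

Definition ones (R : realFieldType) (k : nat) : 'cV[R]_k := const_mx 1.

Definition yvec (R : realFieldType) n m (H : 'M[R]_(n, m)) (v : 'cV[R]_n)
  : 'cV[R]_n := H *m ones R m + v.

Definition Lmat (R : realFieldType) n m (H : 'M[R]_(n, m)) (y : 'cV[R]_n)
  : 'M[R]_(m + 1) :=
  block_mx (H^T *m H) (- (H^T *m y)) (- (y^T *m H)) (y^T *m y).

Definition Mmat (R : realFieldType) m : 'M[R]_(m, m + 1) :=
  row_mx 1%:M (- ones R m).

Definition L0mat (R : realFieldType) n m (H : 'M[R]_(n, m)) : 'M[R]_(m + 1) :=
  (Mmat R m)^T *m H^T *m H *m Mmat R m.

Definition inH (R : realFieldType) m (X : 'M[R]_(m + 1)) : Prop :=
  \tr (Mmat R m *m X *m (Mmat R m)^T) = 1.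

Definition is_tau (R : realFieldType) n m (H : 'M[R]_(n, m)) (t : R) : Prop :=
  (exists X : 'M[R]_(m + 1), feasX X /\ inH X /\ \tr (L0mat H *m X) = t) /\
  (forall X : 'M[R]_(m + 1), feasX X -> inH X -> t <= \tr (L0mat H *m X)).

Definition sdr_optimal (R : realFieldType) k (L X : 'M[R]_k) : Prop :=
  feasX X /\ forall Y : 'M[R]_k, feasX Y -> \tr (L *m X) <= \tr (L *m Y).

Definition sgn (R : realFieldType) (x : R) : R := if 0 < x then 1 else -1.

Definition sqnorm (R : realFieldType) n (v : 'cV[R]_n) : R :=
  \sum_(i < n) v i 0 ^+ 2.

(* Main.v *)
Require Import Defs.
From HB Require Import structures.
From mathcomp Require Import all_boot all_order all_algebra ring lra.
Set Implicit Arguments. Unset Strict Implicit. Unset Printing Implicit Defensive.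
Import Order.TTheory GRing.Theory Num.Theory.
Local Open Scope ring_scope.

Section S.
Variable R : realFieldType.

Definition fq n k (X : 'M[R]_k) (U V : 'M[R]_(n, k)) := \tr (U *m X *m V^T).

Lemma tr_opp n (A : 'M[R]_n) : \tr (- A) = - \tr A.
Proof. by rewrite /mxtrace -sumrN; apply: eq_bigr => i _; rewrite mxE. Qed.

Lemma fqDl n k (X : 'M[R]_k) (U V W : 'M[R]_(n, k)) :
  fq X (U + V) W = fq X U W + fq X V W.
Proof. by rewrite /fq !mulmxDl mxtraceD. Qed.
Lemma fqDr n k (X : 'M[R]_k) (U V W : 'M[R]_(n, k)) :
  fq X W (U + V) = fq X W U + fq X W V.
Proof.
rewrite /fq.
have -> : (U + V)^T = U^T + V^T by apply/matrixP => i j; rewrite !mxE.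
by rewrite !mulmxDr mxtraceD.
Qed.
Lemma fqNl n k (X : 'M[R]_k) (U W : 'M[R]_(n, k)) :
  fq X (- U) W = - fq X U W.
Proof. by rewrite /fq !mulNmx tr_opp. Qed.
Lemma fqNr n k (X : 'M[R]_k) (U W : 'M[R]_(n, k)) :
  fq X W (- U) = - fq X W U.
Proof.
rewrite /fq.
have -> : (- U)^T = - U^T by apply/matrixP => i j; rewrite !mxE.
by rewrite !mulmxN tr_opp.
Qed.

Lemma fq_id n k (X : 'M[R]_k) (P Q : 'M[R]_(n, k)) :
  2 * fq X (P - Q) (P - Q) = fq X (P - Q - Q) (P - Q - Q) + fq X P P - 2 * fq X Q Q.
Proof. rewrite !(fqDl, fqDr, fqNl, fqNr); ring. Qed.

Lemma tr11 (A : 'M[R]_1) : \tr A = A 0 0.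
Proof. by rewrite /mxtrace big_ord1. Qed.

Lemma fq_e k (X : 'M[R]_k) a b :
  fq X (delta_mx 0 a : 'rV_k) (delta_mx 0 b) = X a b.
Proof.
by rewrite /fq -rowE trmx_delta -colE tr11 !mxE.
Qed.

Lemma fq_sym n k (X : 'M[R]_k) (U V : 'M[R]_(n, k)) :
  X^T = X -> fq X U V = fq X V U.
Proof.
move=> sX; rewrite /fq -mxtrace_tr !trmx_mul trmxK sX mulmxA.
by [].
Qed.

Lemma diag_row p k (X : 'M[R]_k) (B : 'M[R]_(p, k)) i :
  (B *m X *m B^T) i i = fq X (row i B) (row i B).
Proof.
rewrite /fq tr11 !mxE; apply: eq_bigr => j _; rewrite !mxE; congr (_ * _).
by apply: eq_bigr => l _; rewrite !mxE.
Qed.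

Lemma psd_row k (X : 'M[R]_k) (w : 'rV[R]_k) : psd X -> 0 <= fq X w w.
Proof.
move=> [_ hX]; rewrite /fq tr11; have := hX w^T; by rewrite trmxK.
Qed.

Lemma psd_fq p k (X : 'M[R]_k) (B : 'M[R]_(p, k)) : psd X -> 0 <= fq X B B.
Proof.
move=> hX; rewrite {1}/fq /mxtrace; apply: sumr_ge0 => i _.
by rewrite diag_row; apply: psd_row.
Qed.

Lemma fq_lin n k (X Y : 'M[R]_k) (U V : 'M[R]_(n, k)) a b :
  fq (a *: X + b *: Y) U V = a * fq X U V + b * fq Y U V.
Proof.
by rewrite /fq mulmxDr mulmxDl -!scalemxAr -!scalemxAl mxtraceD !mxtraceZ.
Qed.

Lemma fq_zero n k (X : 'M[R]_k) (U V : 'M[R]_(n, k)) :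
  U *m X = 0 -> fq X U V = 0.
Proof. by move=> h; rewrite /fq h mul0mx /mxtrace big1 // => i _; rewrite mxE. Qed.

End S.

Lemma tN (R : realFieldType) p q (A : 'M[R]_(p, q)) : (- A)^T = - A^T.
Proof. by apply/matrixP => i j; rewrite !mxE. Qed.

Theorem lemma1 (R : realFieldType) (n m : nat) (H : 'M[R]_(n, m)) (v : 'cV[R]_n)
  (tau : R) :
  is_tau H tau ->
  4 * sqnorm v < tau ->
  forall Xs : 'M[R]_(m + 1),
    sdr_optimal (Lmat H (yvec H v)) Xs ->
    forall i : 'I_m, sgn (Xs (lshift 1 i) (rshift m ord0)) = 1.
Proof.
move=> [[X0 [fX0 [hX0 tX0]]] taumin] htau Xs [fXs opt] i.
set rr : 'I_(m + 1) := rshift m ord0.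
set li : 'I_(m + 1) := lshift 1 i.
set e := ones R (m + 1).
set J := e *m e^T.
have Je : forall a b, J a b = 1.
  by move=> a b; rewrite !mxE big_ord1 !mxE mulr1.
have Jsym : J^T = J by rewrite /J trmx_mul trmxK.
have Jfeas : feasX J.
  split; first by move=> a; rewrite Je.
  split=> // x.
  have -> : x^T *m J *m x = (x^T *m e) *m (x^T *m e)^T.
    by rewrite /J trmx_mul trmxK !mulmxA.
  by rewrite !mxE big_ord1 !mxE -expr2 sqr_ge0.
have e1 : forall p, ones R p *m (const_mx 1 : 'M[R]_1) = ones R p.
  by move=> p; apply/matrixP => a b; rewrite !mxE big_ord1 !mxE mulr1.
have Me : Mmat R m *m e = 0.
  rewrite /e /Mmat /ones -(@col_mx_const _ m 1) mul_row_col mul1mx.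
  by rewrite mulNmx e1 subrr.
have MJ : Mmat R m *m J = 0 by rewrite /J mulmxA Me mul0mx.
clearbody J.
set P := H *m Mmat R m.
have PJ : P *m J = 0 by rewrite /P -mulmxA MJ mulmx0.
set Q := v *m (delta_mx 0 rr : 'rV[R]_(m + 1)).
have d00 : v *m (delta_mx 0 0 : 'M[R]_1) = v.
  by rewrite -colE; apply/matrixP => a b; rewrite !mxE ord1.
have Aeq : P - Q = row_mx H (- yvec H v).
  rewrite /P /Q /Mmat /rr delta_mx_rshift mul_mx_row mul_mx_row mulmx1 mulmx0 d00.
  by rewrite opp_row_mx add_row_mx oppr0 addr0 /yvec opprD mulmxN.
have LA : Lmat H (yvec H v) = (P - Q)^T *m (P - Q).
  by rewrite Aeq tr_row_mx mul_col_row /Lmat tN !mulmxN !mulNmx opprK.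
have Lq : forall X, \tr (Lmat H (yvec H v) *m X) = fq X (P - Q) (P - Q).
  by move=> X; rewrite LA -mulmxA mxtrace_mulC.
have L0q : forall X, \tr (L0mat H *m X) = fq X P P.
  move=> X; have -> : L0mat H = P^T *m P by rewrite /P /L0mat trmx_mul !mulmxA.
  by rewrite -mulmxA mxtrace_mulC.
have Qq : forall X : 'M[R]_(m + 1), X rr rr = 1 -> fq X Q Q = sqnorm v.
  move=> X hX; rewrite /fq /Q.
  have -> : v *m delta_mx 0 rr *m X *m (v *m delta_mx 0 rr)^T =
    v *m (delta_mx 0 rr *m X *m (delta_mx 0 rr)^T) *m v^T by rewrite trmx_mul !mulmxA.
  have := fq_e X rr rr; rewrite /fq tr11 => h.
  rewrite [Z in v *m Z]mx11_scalar h hX mulmx1.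
  by rewrite /mxtrace /sqnorm; apply: eq_bigr => a _; rewrite !mxE big_ord1 !mxE expr2.
have Xdiag := fXs.1.
have Xsym := fXs.2.1.
have Xpsd := fXs.2.
have XsE : forall a b, Xs b a = Xs a b by move=> a b; rewrite -{1}Xsym mxE.
have LJ : \tr (Lmat H (yvec H v) *m J) = sqnorm v.
  rewrite Lq !(fqDl, fqDr, fqNl, fqNr) (fq_sym Q P Jsym) !(fq_zero _ PJ).
  rewrite (Qq J (Je _ _)); lra.
have g1le : fq Xs (P - Q) (P - Q) <= sqnorm v by rewrite -Lq -LJ; apply: opt.
have g2 : 0 <= fq Xs (P - Q - Q) (P - Q - Q) by apply: psd_fq.
have fid := fq_id Xs P Q.
have QX : fq Xs Q Q = sqnorm v := Qq Xs (Xdiag rr).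
have b0 : 0 <= sqnorm v by apply: sumr_ge0 => k _; apply: sqr_ge0.
rewrite /sgn; case: ifP => // /negbT; rewrite -leNgt => hx; exfalso.
set s := fq Xs (Mmat R m) (Mmat R m).
have rowM : row i (Mmat R m) = delta_mx 0 li - delta_mx 0 rr.
  rewrite /Mmat row_row_mx row1 /li /rr delta_mx_lshift delta_mx_rshift.
  have -> : row i (- ones R m) = - (delta_mx 0 0 : 'M[R]_1).
    by apply/matrixP => a b; rewrite !mxE !ord1.
  by rewrite opp_row_mx add_row_mx subr0 sub0r.
have s1 : 2 - 2 * Xs li rr <= s.
  rewrite /s /fq /mxtrace (bigD1 i) //=.
  have -> : (Mmat R m *m Xs *m (Mmat R m)^T) i i = 2 - 2 * Xs li rr.
    rewrite diag_row rowM !(fqDl, fqDr, fqNl, fqNr) !fq_e Xdiag XsE Xdiag; ring.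
  rewrite lerDl; apply: sumr_ge0 => k _; rewrite diag_row; exact: psd_row.
have s0 : 0 < s by lra.
set t := s^-1.
have ts : t * s = 1 by rewrite mulVf // gt_eqF.
have t0 : 0 <= t by rewrite invr_ge0 ltW.
have t1 : t <= 1 by nra.
set X' := (1 - t) *: J + t *: Xs.
have fX' : feasX X'.
  split; first by move=> a; rewrite !mxE Je Xdiag !mulr1 subrK.
  split; first by apply/matrixP => a b; rewrite !mxE !Je XsE.
  move=> x.
  have -> : x^T *m X' *m x = (1 - t) *: (x^T *m J *m x) + t *: (x^T *m Xs *m x).
    by rewrite mulmxDr -!scalemxAr mulmxDl -!scalemxAl.
  have hJ := Jfeas.2.2 x; have hXx := Xpsd.2 x.
  rewrite !mxE in hJ hXx *; apply: addr_ge0; apply: mulr_ge0; rewrite ?subr_ge0 //.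
have hX' : inH X'.
  rewrite /inH; change (fq X' (Mmat R m) (Mmat R m) = 1).
  by rewrite fq_lin (fq_zero _ MJ) mulr0 add0r.
have := taumin X' fX' hX'; rewrite L0q fq_lin (fq_zero _ PJ) mulr0 add0r => ta.
set a := fq Xs P P in ta fid.
have aT : tau <= a by nra.
lra.
Qed.
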